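(* Let $\mathbf{P_0},\mathbf{P_1}$ be $n\times n$ transition probability matrices of irreducible and aperiodic Markov chains on $n$ states, let $\mathbf{P_t}=(1-t)\mathbf{P_0}+t\mathbf{P_1}$ for $t\in[0,1]$, and let $\pi_1$ be the stationary distribution of $\mathbf{P_1}$. Then for every $\epsilon>0$, $$t_{ad}(\mathbf{P_0},\mathbf{P_1},\epsilon)\le\frac{2\,t_{mix}^2(\mathbf{P_1},\epsilon/2)}{\epsilon}.$$
   Context: Distributions are row vectors; $\|\mu-\nu\|_{TV}=\frac12\|\mu-\nu\|_1$. For an irreducible aperiodic transition matrix $\mathbf{P}$ with stationary distribution $\pi$, $t_{mix}(\mathbf{P},\epsilon)=\inf\{T\in\mathbb{N}: \|\nu\mathbf{P}^T-\pi\|_{TV}\le\epsilon \text{ for all distributions }\nu\}$. The adiabatic time is $$t_{ad}(\mathbf{P_0},\mathbf{P_1},\epsilon)=\inf\{T^*\in\mathbb{N}: \max_\nu\|\nu\mathbf{P_0}\mathbf{P_{1/T}}\mathbf{P_{2/T}}\cdots\mathbf{P_1}-\pi_1\|_{TV}\le\epsilon \text{ for all } T\in\mathbb{N},\,T\ge T^*\},$$ the maximum being over all probability distributions $\nu$ and the product being $\mathbf{P_{0/T}}\mathbf{P_{1/T}}\cdots\mathbf{P_{T/T}}$. *)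

(* Defs.v *)
From HB Require Import structures.
From mathcomp Require Import all_boot all_order all_algebra.
From mathcomp Require Import all_classical all_reals ereal.
Set Implicit Arguments. Unset Strict Implicit. Unset Printing Implicit Defensive.
Import Order.TTheory GRing.Theory Num.Theory.
Local Open Scope ring_scope.

Section MC.
Variables (R : realType) (n : nat).

Definition is_distr (mu : 'rV[R]_n) : Prop :=
  (forall j, 0 <= mu 0 j) /\ \sum_j mu 0 j = 1.

Definition stochastic (P : 'M[R]_n) : Prop :=
  (forall i j, 0 <= P i j) /\ (forall i, \sum_j P i j = 1).

Definition irreducible (P : 'M[R]_n) : Prop :=
  forall i j, exists k : nat, 0 < (P ^+ k) i j.

(* aperiodic: for each state i, gcd {k >= 1 : P^k(i,i) > 0} = 1 *)
Definition aperiodic (P : 'M[R]_n) : Prop :=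
  forall (i : 'I_n) (d : nat),
    (forall k : nat, (0 < k)%N -> 0 < (P ^+ k) i i -> (d %| k)%N) -> d = 1%N.

Definition stationary (P : 'M[R]_n) (pi : 'rV[R]_n) : Prop :=
  is_distr pi /\ pi *m P = pi.

Definition tv (mu nu : 'rV[R]_n) : R := 2^-1 * \sum_j `|mu 0 j - nu 0 j|.

(* infimum of a set of naturals in the extended reals (+oo if empty) *)
Definition nat_inf (S : nat -> Prop) : \bar R :=
  ereal_inf [set ((k%:R : R)%:E) | k in S].

Definition tmix (P : 'M[R]_n) (pi : 'rV[R]_n) (eps : R) : \bar R :=
  nat_inf (fun T => forall nu, is_distr nu -> tv (nu *m P ^+ T) pi <= eps).

Definition interp (P0 P1 : 'M[R]_n) (t : R) : 'M[R]_n := (1 - t) *: P0 + t *: P1.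

(* P_{0/T} P_{1/T} ... P_{T/T}, product taken left to right *)
Definition adiab_prod (P0 P1 : 'M[R]_n) (T : nat) : 'M[R]_n :=
  \big[mulmx/1%:M]_(i < T.+1) interp P0 P1 (i%:R / T%:R).

Definition tad (P0 P1 : 'M[R]_n) (pi1 : 'rV[R]_n) (eps : R) : \bar R :=
  nat_inf (fun Tstar => forall T : nat, (0 < T)%N -> (Tstar <= T)%N ->
     forall nu, is_distr nu -> tv (nu *m adiab_prod P0 P1 T) pi1 <= eps).

End MC.

(* Main.v *)
Require Import Defs.
From HB Require Import structures.
From mathcomp Require Import all_boot all_order all_algebra.
From mathcomp Require Import all_classical all_reals ereal.
From mathcomp Require Import ring lra zify.
Import Order.TTheory GRing.Theory Num.Theory.
Local Open Scope ring_scope.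
Set Implicit Arguments. Unset Strict Implicit.

Section Aux.
Variables (R : realType) (n : nat).

Definition l1 (u : 'rV[R]_n) : R := \sum_j `|u 0 j|.

Lemma l1_ge0 u : 0 <= l1 u.
Proof. by apply: sumr_ge0 => j _. Qed.

Lemma l1_mul (P : 'M[R]_n) (u : 'rV[R]_n) : stochastic P -> l1 (u *m P) <= l1 u.
Proof.
move=> [Pge0 Psum]; rewrite /l1.
under eq_bigr do rewrite mxE.
apply: (le_trans (y := \sum_j \sum_i `|u 0 i| * P i j)).
  apply: ler_sum => j _; apply: (le_trans (ler_norm_sum _ _ _)).
  by apply: ler_sum => i _; rewrite normrM (ger0_norm (Pge0 _ _)).
rewrite exchange_big /=; apply: ler_sum => i _.
by rewrite -mulr_sumr Psum mulr1.
Qed.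

Lemma distr_mul (P : 'M[R]_n) (u : 'rV[R]_n) : stochastic P -> is_distr u -> is_distr (u *m P).
Proof.
move=> [Pge0 Psum] [uge0 usum]; split.
  by move=> j; rewrite mxE; apply: sumr_ge0 => i _; apply: mulr_ge0.
under eq_bigr do rewrite mxE.
by rewrite exchange_big /=; under eq_bigr do rewrite -mulr_sumr Psum mulr1.
Qed.

Lemma stoch_mul (A B : 'M[R]_n) : stochastic A -> stochastic B -> stochastic (A *m B).
Proof.
move=> [Age0 Asum] [Bge0 Bsum]; split.
  by move=> i j; rewrite mxE; apply: sumr_ge0 => k _; apply: mulr_ge0.
move=> i; under eq_bigr do rewrite mxE.
by rewrite exchange_big /=; under eq_bigr do rewrite -mulr_sumr Bsum mulr1.
Qed.

Lemma stoch_1 : stochastic (1%:M : 'M[R]_n).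
Proof.
split; first by move=> i j; rewrite mxE; case: (i == j).
move=> i; rewrite (bigD1 i) //= mxE eqxx big1 ?addr0 // => j /negPf ji.
by rewrite mxE eq_sym ji.
Qed.

Lemma l1_distr u : is_distr u -> l1 u = 1.
Proof. by move=> [uge0 usum]; rewrite /l1 -usum; apply: eq_bigr => j _; rewrite ger0_norm. Qed.

Lemma l1D u v : l1 (u + v) <= l1 u + l1 v.
Proof. rewrite /l1 -big_split; apply: ler_sum => j _; rewrite mxE; exact: ler_normD. Qed.

Lemma l1N u : l1 (- u) = l1 u.
Proof. by apply: eq_bigr => j _; rewrite mxE normrN. Qed.

Lemma l1B u v : l1 (u - v) <= l1 u + l1 v.
Proof. by rewrite -(l1N v); apply: l1D. Qed.

Lemma l1Z a u : l1 (a *: u) = `|a| * l1 u.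
Proof. by rewrite /l1 mulr_sumr; apply: eq_bigr => j _; rewrite mxE normrM. Qed.

Lemma tv_l1 u v : tv u v = 2^-1 * l1 (u - v).
Proof. by rewrite /tv /l1; congr (_ * _); apply: eq_bigr => j _; rewrite !mxE. Qed.

Lemma tv_tri a b pi : tv a pi <= tv b pi + 2^-1 * l1 (a - b).
Proof.
rewrite /tv /l1 -mulrDr ler_pM2l ?invr_gt0 ?ltr0n // -big_split.
apply: ler_sum => j _; rewrite !mxE.
have -> : a 0 j - pi 0 j = (b 0 j - pi 0 j) + (a 0 j - b 0 j) by ring.
exact: ler_normD.
Qed.

Lemma l1_mulX (P : 'M[R]_n) u m : stochastic P -> l1 (u *m P ^+ m) <= l1 u.
Proof.
move=> hP; elim: m u => [|m IH] u; first by rewrite expr0 mulmx1.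
by rewrite exprSr -mulmxE mulmxA; apply: le_trans (l1_mul _ hP) (IH _).
Qed.

Lemma tele (P1 : 'M[R]_n) (F : nat -> 'M[R]_n) (d : R) m : stochastic P1 ->
  forall c, (forall i, (c <= i < c + m)%N -> stochastic (F i) /\
      forall mu, is_distr mu -> l1 (mu *m F i - mu *m P1) <= d) ->
  forall mu, is_distr mu ->
  l1 (mu *m \big[mulmx/1%:M]_(c <= i < c + m) F i - mu *m P1 ^+ m) <= m%:R * d.
Proof.
move=> hP1; elim: m => [|m IH] c hF mu hmu.
  by rewrite addn0 big_geq // expr0 mulmx1 subrr mul0r /l1 big1 // => j _; rewrite mxE normr0.
rewrite big_ltn; last by rewrite -addSnnS leq_addr.
have [hFc hdc] : stochastic (F c) /\ forall mu, is_distr mu -> l1 (mu *m F c - mu *m P1) <= d.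
  by apply: hF; rewrite leqnn /= -addSnnS leq_addr.
rewrite -addSnnS mulmxA exprS -mulmxE mulmxA.
set mu' := mu *m F c.
have -> : mu' *m \big[mulmx/1%:M]_(c.+1 <= i < c.+1 + m) F i - mu *m P1 *m P1 ^+ m =
  (mu' *m \big[mulmx/1%:M]_(c.+1 <= i < c.+1 + m) F i - mu' *m P1 ^+ m) +
  (mu' - mu *m P1) *m P1 ^+ m.
  by rewrite mulmxBl addrA subrK.
apply: le_trans (l1D _ _) _.
rewrite -nat1r mulrDl mul1r [d + _]addrC; apply: lerD.
  apply: IH; last exact: distr_mul.
  by move=> i /andP[hi1 hi2]; apply: hF; rewrite (ltnW hi1) /= -addSnnS.
by apply: le_trans (l1_mulX _ _ hP1) _; apply: hdc.
Qed.

Lemma prefix (G : nat -> 'M[R]_n) (pi : 'rV[R]_n) a b (B : R) : (a <= b)%N ->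
  (forall i, (i < b)%N -> stochastic (G i)) ->
  (forall mu, is_distr mu -> tv (mu *m \big[mulmx/1%:M]_(a <= i < b) G i) pi <= B) ->
  forall d mu, (d <= a)%N -> is_distr mu ->
  tv (mu *m \big[mulmx/1%:M]_(a - d <= i < b) G i) pi <= B.
Proof.
move=> hab hG hB; elim=> [|d IH] mu hd hmu; first by rewrite subn0; apply: hB.
rewrite big_ltn; last by lia.
have -> : ((a - d.+1).+1 = a - d)%N by lia.
rewrite mulmxA; apply: IH; first exact: ltnW.
apply: distr_mul => //; apply: hG; lia.
Qed.

Lemma stoch_interp (P0 P1 : 'M[R]_n) s : stochastic P0 -> stochastic P1 -> 0 <= s <= 1 ->
  stochastic (interp P0 P1 s).
Proof.
move=> [h0 s0] [h1 s1] /andP[hs0 hs1]; split.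
  move=> i j; rewrite !mxE; apply: addr_ge0; apply: mulr_ge0 => //; by rewrite subr_ge0.
move=> i; under eq_bigr do rewrite !mxE.
by rewrite big_split /= -!mulr_sumr s0 s1 !mulr1 subrK.
Qed.

Lemma interp_diff (P0 P1 : 'M[R]_n) (s : R) (mu : 'rV[R]_n) :
  mu *m interp P0 P1 s - mu *m P1 = (1 - s) *: (mu *m P0 - mu *m P1).
Proof.
rewrite /interp mulmxDr -!scalemxAr.
move: (mu *m P0) (mu *m P1) => x y.
by apply/rowP => j; rewrite !mxE; ring.
Qed.

Lemma nat_inf_le (S : nat -> Prop) k (x : \bar R) : S k -> ((k%:R)%:E <= x)%E -> (nat_inf R S <= x)%E.
Proof.
move=> Sk hx; apply: le_trans hx; apply: ereal_inf_lbound; by exists k.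
Qed.

Lemma nat_inf_min (S : nat -> Prop) : (exists k, S k) -> exists k, S k /\ nat_inf R S = (k%:R)%:E.
Proof.
move=> hex.
have hex' : exists k, `[< S k >] by case: hex => k Sk; exists k; apply/asboolP.
case: (ex_minnP hex') => k /asboolP Sk hmin; exists k; split => //.
apply/le_anti/andP; split; first by apply: nat_inf_le Sk _.
apply/ereal_infP => y [j Sj <-]; rewrite lee_fin ler_nat; apply: hmin; exact/asboolP.
Qed.

Lemma nat_inf_none (S : nat -> Prop) : ~ (exists k, S k) -> nat_inf R S = +oo%E.
Proof.
move=> hn; apply/le_anti/andP; split; first exact: leey.
apply/ereal_infP => y [j Sj _]; exfalso; apply: hn; by exists j.
Qed.

Lemma tv_le1 (u v : 'rV[R]_n) : is_distr u -> is_distr v -> tv u v <= 1.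
Proof.
move=> hu hv; rewrite tv_l1; apply: le_trans (_ : 2^-1 * (l1 u + l1 v) <= 1).
  by rewrite ler_pM2l ?invr_gt0 ?ltr0n //; apply: l1B.
by rewrite !l1_distr // mulVf.
Qed.

End Aux.

Section Main.
Variables (R : realType) (n : nat).

Lemma stoch_adiab (P0 P1 : 'M[R]_n) T : stochastic P0 -> stochastic P1 -> (0 < T)%N ->
  stochastic (adiab_prod P0 P1 T).
Proof.
move=> h0 h1 hT; rewrite /adiab_prod; apply: (big_ind (@stochastic R n)).
- exact: stoch_1.
- by move=> A B hA hB; apply: stoch_mul.
move=> i _; apply: stoch_interp => //; apply/andP; split.
  by apply: divr_ge0.
by rewrite ler_pdivrMr ?ltr0n // mul1r ler_nat -ltnS.
Qed.

Lemma adiab_bound (P0 P1 : 'M[R]_n) (pi1 : 'rV[R]_n) (eps : R) k T :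
  stochastic P0 -> stochastic P1 ->
  (forall nu, is_distr nu -> tv (nu *m P1 ^+ k) pi1 <= eps / 2) ->
  (0 < T)%N -> (k <= T.+1)%N -> forall mu, is_distr mu ->
  tv (mu *m adiab_prod P0 P1 T) pi1 <= eps / 2 + 2^-1 * (k%:R * (2 * (k%:R - 1) / T%:R)).
Proof.
move=> h0 h1 Sk hT hk mu hmu.
rewrite /adiab_prod -(big_mkord xpredT (fun i : nat => interp P0 P1 (i%:R / T%:R))) /=.
set G := fun i : nat => interp P0 P1 (i%:R / T%:R).
have hs : forall i, (i < T.+1)%N -> 0 <= (i%:R / T%:R : R) <= 1.
  move=> i hi; apply/andP; split; first by apply: divr_ge0.
  by rewrite ler_pdivrMr ?ltr0n // mul1r ler_nat -ltnS.
have hG : forall i, (i < T.+1)%N -> stochastic (G i).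
  by move=> i hi; apply: stoch_interp => //; apply: hs.
have := prefix (pi := pi1) (a := (T.+1 - k)%N) (b := T.+1)
  (B := eps / 2 + 2^-1 * (k%:R * (2 * (k%:R - 1) / T%:R))) (leq_subr _ _) hG _ (leqnn (T.+1 - k)%N) hmu.
rewrite subnn; apply => nu hnu.
apply: le_trans (tv_tri _ (nu *m P1 ^+ k) _) _.
apply: lerD; first exact: Sk.
rewrite ler_pM2l ?invr_gt0 ?ltr0n //.
have := tele (d := 2 * (k%:R - 1) / T%:R) (m := k) (F := G) h1 (c := (T.+1 - k)%N) _ hnu.
rewrite subnK //; apply.
move=> i /andP[hi1 hi2].
split; first exact: hG.
move=> mu' hmu'; rewrite /G interp_diff l1Z.
have /andP[s0 s1] := hs i hi2.
rewrite ger0_norm ?subr_ge0 //.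
have hl : l1 (mu' *m P0 - mu' *m P1) <= 2.
  apply: le_trans (l1B _ _) _.
  by rewrite (l1_distr (distr_mul h0 hmu')) (l1_distr (distr_mul h1 hmu')); lra.
apply: le_trans (_ : (1 - i%:R / T%:R) * 2 <= _).
  by apply: ler_wpM2l; rewrite ?subr_ge0.
have hTr : 0 < T%:R :> R by rewrite ltr0n.
have hik : (T.+1 <= i + k)%N by lia.
have hik' : (T%:R + 1 <= i%:R + k%:R :> R).
  by rewrite -natrD -[1 : R]/(1%:R) -natrD ler_nat addn1.
have e : (k%:R - 1) / T%:R - (1 - i%:R / T%:R) = (i%:R + k%:R - (T%:R + 1)) / T%:R :> R.
  by field; rewrite gt_eqF.
have : 0 <= (i%:R + k%:R - (T%:R + 1)) / T%:R :> R.
  by apply: divr_ge0; rewrite ?subr_ge0 // ltW.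
rewrite -e -mulrA.
move: ((k%:R - 1) / T%:R) (i%:R / T%:R) => y z; lra.
Qed.

End Main.

Unset Implicit Arguments. Set Strict Implicit.

Theorem proposition1 (R : realType) (n : nat) (P0 P1 : 'M[R]_n) (pi1 : 'rV[R]_n)
  (hP0 : stochastic P0) (hP1 : stochastic P1)
  (hirr0 : irreducible P0) (hap0 : aperiodic P0)
  (hirr1 : irreducible P1) (hap1 : aperiodic P1)
  (hpi1 : stationary P1 pi1) (eps : R) (heps : 0 < eps) :
  (tad P0 P1 pi1 eps <=
     ((2 / eps)%:E * (tmix P1 pi1 (eps / 2) * tmix P1 pi1 (eps / 2))))%E.
Proof.
rewrite /tmix.
set Smix := (fun T => forall nu, is_distr nu -> tv (nu *m P1 ^+ T) pi1 <= eps / 2).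
case: (pselect (exists k, Smix k)) => [hex|hnone]; last first.
  rewrite nat_inf_none // mulyy mulry gtr0_sg ?divr_gt0 // mul1e; exact: leey.
case: (nat_inf_min R hex) => k [Sk ->].
rewrite -!EFinM.
have hpid : is_distr pi1 by case: hpi1.
case: (lerP 2 eps) => heps2.
  apply: (nat_inf_le (k := 0%N)).
    move=> T hT _ nu hnu; apply: le_trans (tv_le1 _ hpid) _; last by lra.
    by apply: distr_mul => //; apply: stoch_adiab.
  rewrite lee_fin; apply: mulr_ge0; first by apply: divr_ge0 => //; apply: ltW.
  by apply: mulr_ge0.
set y := 2 / eps * (k%:R * k%:R).
have hy0 : 0 <= y by apply: mulr_ge0; [apply: divr_ge0 => //; apply: ltW | apply: mulr_ge0].
have /andP[hN1 hN2] := trunc_itv hy0.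
apply: (nat_inf_le (k := Num.trunc y)); last by rewrite lee_fin.
move=> T hT hNT nu hnu.
have hTr : 0 < T%:R :> R by rewrite ltr0n.
have hyT : y < T%:R + 1.
  apply: lt_le_trans hN2 _; rewrite -[1 : R]/(1%:R) -natrD ler_nat addn1; exact: hNT.
have hk2 : 2 * (k%:R * k%:R) < eps * (T%:R + 1).
  have ey : y * eps = 2 * (k%:R * k%:R) by rewrite /y; field; rewrite gt_eqF.
  rewrite -ey; nra.
have hkT : (k <= T.+1)%N.
  have : (k * k < T.+1)%N.
    rewrite -(ltr_nat R) natrM -natr1; nra.
  nia.
apply: le_trans (adiab_bound hP0 hP1 Sk hT hkT hnu) _.
have e : 2^-1 * (k%:R * (2 * (k%:R - 1) / T%:R)) = (k%:R * (k%:R - 1)) / T%:R :> R.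
  by field; rewrite gt_eqF.
rewrite e.
have : k%:R * (k%:R - 1) <= eps / 2 * T%:R.
  case: (posnP k) => [-> | hk0]; first by rewrite mul0r; apply: mulr_ge0; lra.
  have hk1 : 1 <= k%:R :> R by rewrite ler1n.
  nra.
rewrite -ler_pdivrMr // => h; lra.
Qed.
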